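(* Let $(X,d)$ be a compact metric space and $f:X\to X$ continuous. If $(x,y)$ is a DC1-pair for $f$, then there exists $(z,w)\in\omega((x,y),f\times f)$ (so $(z,w)\in CR(f)^2$) such that $z\sim w$ and $(z,w)$ has property*.
   Context: A pair $(x,y)$ is a DC1-pair if $\limsup_{n}\frac1n|\{0\le i<n: d(f^i(x),f^i(y))<\delta\}|=1$ for every $\delta>0$ and $\limsup_{n}\frac1n|\{0\le i<n: d(f^i(x),f^i(y))>\delta_0\}|=1$ for some $\delta_0>0$. $\omega((x,y),f\times f)$ is the set of limit points of $(f^n(x),f^n(y))$ as $n\to\infty$. A $\delta$-chain of $f$ is a finite sequence $(x_i)_{i=0}^k$, $k\ge1$, with $d(f(x_i),x_{i+1})\le\delta$; a $\delta$-cycle is a $\delta$-chain with $x_0=x_k$. $CR(f)$ is the set of points $x$ such that for every $\delta>0$ there is a $\delta$-cycle starting and ending at $x$. For $x,y\in CR(f)$, $x\sim y$ iff for every $\delta>0$ there are integers $m>0$, $N>0$ such that for every $n\ge N$ there are $\delta$-chains $(x_i)_{i=0}^{mn},(y_i)_{i=0}^{mn}$ in $CR(f)$ with $x_0=y_{mn}=x$, $x_{mn}=y_0=y$. A pair $(x,y)\in CR(f)^2$ has property* if there is $r>0$ such that for every $\delta>0$ there are $\delta$-cycles $(x_i)_{i=0}^k,(y_i)_{i=0}^k$ of $f$ in $CR(f)$ of the same length with $x_0=x_k=x$, $y_0=y_k=y$ and $d(x_i,y_i)>r$ for all $0\le i\le k$. *)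

(* Defs.v *)
From Stdlib Require Import Reals Lra Lia List.
Open Scope R_scope.

Definition is_metric {X : Type} (d : X -> X -> R) : Prop :=
  (forall x y, 0 <= d x y) /\
  (forall x y, d x y = 0 <-> x = y) /\
  (forall x y, d x y = d y x) /\
  (forall x y z, d x z <= d x y + d y z).

Definition is_open {X : Type} (d : X -> X -> R) (U : X -> Prop) : Prop :=
  forall x, U x -> exists r, 0 < r /\ forall y, d x y < r -> U y.

Definition is_compact {X : Type} (d : X -> X -> R) : Prop :=
  forall (I : Type) (U : I -> X -> Prop),
    (forall i, is_open d (U i)) ->
    (forall x, exists i, U i x) ->
    exists l : list I, forall x, exists i, In i l /\ U i x.

Definition is_continuous {X : Type} (d : X -> X -> R) (f : X -> X) : Prop :=
  forall x eps, 0 < eps -> exists del, 0 < del /\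
    forall y, d x y < del -> d (f x) (f y) < eps.

Fixpoint iter {X : Type} (n : nat) (f : X -> X) (x : X) : X :=
  match n with O => x | S n' => f (iter n' f x) end.

Fixpoint count_lt (g : nat -> R) (c : R) (n : nat) : nat :=
  match n with
  | O => O
  | S n' => (count_lt g c n' + (if Rlt_dec (g n') c then 1 else 0))%nat
  end.
Fixpoint count_gt (g : nat -> R) (c : R) (n : nat) : nat :=
  match n with
  | O => O
  | S n' => (count_gt g c n' + (if Rlt_dec c (g n') then 1 else 0))%nat
  end.

Definition is_limsup (u : nat -> R) (l : R) : Prop :=
  forall eps, 0 < eps ->
    (forall N : nat, exists n : nat, (N <= n)%nat /\ l - eps < u n) /\
    (exists N : nat, forall n : nat, (N <= n)%nat -> u n < l + eps).

Definition DC1_pair {X : Type} (d : X -> X -> R) (f : X -> X) (x y : X) : Prop :=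
  (forall del, 0 < del ->
     is_limsup (fun n => INR (count_lt (fun i => d (iter i f x) (iter i f y)) del n) / INR n) 1)
  /\
  (exists del0, 0 < del0 /\
     is_limsup (fun n => INR (count_gt (fun i => d (iter i f x) (iter i f y)) del0 n) / INR n) 1).

Definition in_omega_pair {X : Type} (d : X -> X -> R) (f : X -> X) (x y z w : X) : Prop :=
  forall eps, 0 < eps -> forall N : nat, exists n : nat, (N <= n)%nat /\
    d (iter n f x) z < eps /\ d (iter n f y) w < eps.

Definition is_chain {X : Type} (d : X -> X -> R) (f : X -> X) (del : R)
  (xs : nat -> X) (k : nat) : Prop :=
  (1 <= k)%nat /\ forall i, (i < k)%nat -> d (f (xs i)) (xs (S i)) <= del.

Definition CR {X : Type} (d : X -> X -> R) (f : X -> X) (x : X) : Prop :=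
  forall del, 0 < del -> exists (k : nat) (xs : nat -> X),
    is_chain d f del xs k /\ xs O = x /\ xs k = x.

Definition chain_in_CR {X : Type} (d : X -> X -> R) (f : X -> X)
  (xs : nat -> X) (k : nat) : Prop :=
  forall i, (i <= k)%nat -> CR d f (xs i).

Definition CR_sim {X : Type} (d : X -> X -> R) (f : X -> X) (x y : X) : Prop :=
  CR d f x /\ CR d f y /\
  forall del, 0 < del -> exists m N : nat, (0 < m)%nat /\ (0 < N)%nat /\
    forall n : nat, (N <= n)%nat -> exists xs ys : nat -> X,
      is_chain d f del xs (m * n) /\ chain_in_CR d f xs (m * n) /\
      is_chain d f del ys (m * n) /\ chain_in_CR d f ys (m * n) /\
      xs O = x /\ ys (m * n)%nat = x /\ xs (m * n)%nat = y /\ ys O = y.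

Definition property_star {X : Type} (d : X -> X -> R) (f : X -> X) (x y : X) : Prop :=
  CR d f x /\ CR d f y /\
  exists r, 0 < r /\ forall del, 0 < del -> exists (k : nat) (xs ys : nat -> X),
    is_chain d f del xs k /\ chain_in_CR d f xs k /\
    is_chain d f del ys k /\ chain_in_CR d f ys k /\
    xs O = x /\ xs k = x /\ ys O = y /\ ys k = y /\
    forall i, (i <= k)%nat -> r < d (xs i) (ys i).

(* Main.v *)
Require Import Defs.
From Stdlib Require Import Reals Lra Lia List Classical ClassicalEpsilon.
From Stdlib Require ZArith.
Open Scope R_scope.

Lemma my_choice {A B : Type} (P : A -> B -> Prop) :
  (forall a, exists b, P a b) -> exists g, forall a, P a (g a).
Proof.
  intros H. exists (fun a => proj1_sig (constructive_indefinite_description _ (H a))).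
  intro a. exact (proj2_sig (constructive_indefinite_description _ (H a))).
Qed.

Definition epsk (k : nat) : R := / INR (S k).

Lemma epsk_pos k : 0 < epsk k.
Proof. unfold epsk. apply Rinv_0_lt_compat. apply lt_0_INR. lia. Qed.

Lemma epsk_small eps : 0 < eps -> exists K, forall k, (K <= k)%nat -> epsk k < eps.
Proof.
  intros He. destruct (archimed (/ eps)) as [H1 _].
  assert (Hup : (0 <= up (/ eps))%Z).
  { apply le_IZR. assert (0 < / eps) by (apply Rinv_0_lt_compat; lra). lra. }
  exists (BinInt.Z.to_nat (up (/ eps))). intros k Hk. unfold epsk.
  assert (HK : / eps < INR (S k)).
  { apply Rlt_le_trans with (IZR (up (/eps))); [lra|].
    rewrite <- (ZArith.Znat.Z2Nat.id _ Hup). rewrite <- INR_IZR_INZ. apply le_INR. lia. }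
  assert (0 < / eps) by (apply Rinv_0_lt_compat; lra).
  replace eps with (/ / eps) by (field; lra).
  apply Rinv_lt_contravar; [|exact HK].
  apply Rmult_lt_0_compat; lra.
Qed.

Lemma list_max {A : Type} (g : A -> nat) (l : list A) :
  exists M, forall i, In i l -> (g i <= M)%nat.
Proof.
  induction l as [|a l IH]. exists O. intros i [].
  destruct IH as [M HM]. exists (Nat.max (g a) M). intros i [<-|Hi].
  lia. specialize (HM i Hi). lia.
Qed.

Section Met.
Variable X : Type.
Variable d : X -> X -> R.
Hypothesis Hd : is_metric d.

Lemma d_pos a b : 0 <= d a b. Proof. apply Hd. Qed.
Lemma d_refl a : d a a = 0. Proof. apply Hd. reflexivity. Qed.
Lemma d_sym a b : d a b = d b a. Proof. apply Hd. Qed.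
Lemma d_tri a b c : d a c <= d a b + d b c. Proof. apply Hd. Qed.
Lemma d_eq a b : d a b = 0 -> a = b. Proof. apply Hd. Qed.

Hypothesis Hcpt : is_compact d.

Lemma acc1 (s : nat -> X) : exists z, forall eps, 0 < eps -> forall N, exists n,
  (N <= n)%nat /\ d (s n) z < eps.
Proof.
  apply NNPP. intro Hn.
  assert (H : forall z, exists p : R * nat, 0 < fst p /\ forall n, (snd p <= n)%nat -> fst p <= d (s n) z).
  { intro z. apply NNPP. intro Hz. apply Hn. exists z. intros eps He N.
    apply NNPP. intro HN. apply Hz. exists (eps, N). simpl. split; [lra|].
    intros n Hn'. apply Rnot_lt_le. intro Hl. apply HN. exists n. auto. }
  destruct (my_choice _ H) as [g Hg].
  destruct (Hcpt X (fun z y => d z y < fst (g z))) as [l Hl].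
  - intros z y Hy. exists (fst (g z) - d z y). split; [lra|].
    intros y' Hy'. pose proof (d_tri z y y'). lra.
  - intros z. exists z. rewrite d_refl. apply Hg.
  - destruct (list_max (fun z => snd (g z)) l) as [M HM].
    destruct (Hl (s M)) as [i [Hi Hu]].
    destruct (Hg i) as [_ Hg2]. specialize (Hg2 M (HM i Hi)).
    rewrite d_sym in Hg2. lra.
Qed.

Lemma acc2 (a b : nat -> X) : exists z w, forall eps, 0 < eps -> forall N, exists n,
  (N <= n)%nat /\ d (a n) z < eps /\ d (b n) w < eps.
Proof.
  destruct (acc1 a) as [z Hz].
  assert (H : forall k, exists n, (k <= n)%nat /\ d (a n) z < epsk k).
  { intro k. apply Hz. apply epsk_pos. }
  destruct (my_choice _ H) as [h Hh].
  destruct (acc1 (fun k => b (h k))) as [w Hw].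
  exists z, w. intros eps He N.
  destruct (epsk_small eps He) as [K HK].
  destruct (Hw eps He (Nat.max N K)) as [k [Hk1 Hk2]].
  exists (h k). destruct (Hh k) as [Hh1 Hh2]. repeat split; try lia; try lra.
  specialize (HK k ltac:(lia)). lra.
Qed.

Variable f : X -> X.
Hypothesis Hf : is_continuous d f.

Lemma unif_cont eps : 0 < eps -> exists eta, 0 < eta /\ forall a b, d a b < eta -> d (f a) (f b) < eps.
Proof.
  intros He. apply NNPP. intro Hn.
  assert (H : forall k, exists p : X * X, d (fst p) (snd p) < epsk k /\ eps <= d (f (fst p)) (f (snd p))).
  { intro k. apply NNPP. intro Hk. apply Hn. exists (epsk k). split; [apply epsk_pos|].
    intros a b Hab. apply Rnot_le_lt. intro Hl. apply Hk. exists (a, b). simpl. auto. }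
  destruct (my_choice _ H) as [g Hg].
  destruct (acc1 (fun k => fst (g k))) as [z Hz].
  destruct (Hf z (eps/2) ltac:(lra)) as [del [Hdel Hc]].
  destruct (epsk_small (del/2) ltac:(lra)) as [K HK].
  destruct (Hz (del/2) ltac:(lra) K) as [k [Hk1 Hk2]].
  destruct (Hg k) as [Hg1 Hg2]. specialize (HK k Hk1).
  assert (E1 : d (f z) (f (fst (g k))) < eps/2). { apply Hc. rewrite d_sym. lra. }
  assert (E2 : d (f z) (f (snd (g k))) < eps/2).
  { apply Hc. pose proof (d_tri z (fst (g k)) (snd (g k))) as T. pose proof (d_sym z (fst (g k))). cbv beta in Hk2. lra. }
  pose proof (d_tri (f (fst (g k))) (f z) (f (snd (g k)))) as T. rewrite (d_sym _ (f z)) in T. lra.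
Qed.

End Met.

Lemma count_gt_le g c n : (count_gt g c n <= n)%nat.
Proof. induction n; simpl; [lia|]. destruct (Rlt_dec c (g n)); lia. Qed.

Lemma count_gt_add g c a m : (count_gt g c (a + m) <= count_gt g c a + m)%nat.
Proof. induction m. rewrite Nat.add_0_r. lia. rewrite Nat.add_succ_r. simpl. destruct (Rlt_dec c (g (a+m)%nat)); lia. Qed.

Lemma count_gt_window g c a B j : (a <= j < a + B)%nat -> ~ (c < g j) ->
  (count_gt g c (a + B) + 1 <= count_gt g c a + B)%nat.
Proof.
  intros Hj Hn.
  pose proof (count_gt_add g c (S j) (a + B - S j)) as H1.
  replace (S j + (a + B - S j))%nat with (a + B)%nat in H1 by lia.
  assert (H2 : count_gt g c (S j) = count_gt g c j). { simpl. destruct (Rlt_dec c (g j)); [contradiction|lia]. }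
  pose proof (count_gt_add g c a (j - a)) as H3.
  replace (a + (j - a))%nat with j in H3 by lia. lia.
Qed.

Lemma count_gt_blocks g c T B : (1 <= B)%nat ->
  (forall i0, (T <= i0)%nat -> exists j, (i0 <= j < i0 + B)%nat /\ ~ (c < g j)) ->
  forall m, (count_gt g c (T + m * B) + m <= T + m * B)%nat.
Proof.
  intros HB H m. induction m.
  - simpl. rewrite Nat.add_0_r. apply count_gt_le.
  - destruct (H (T + m * B)%nat ltac:(lia)) as [j [Hj1 Hj2]].
    pose proof (count_gt_window g c (T + m*B) B j Hj1 Hj2).
    replace (T + S m * B)%nat with (T + m * B + B)%nat by lia. lia.
Qed.

Lemma count_gt_run g c T B : (1 <= B)%nat ->
  (forall i0, (T <= i0)%nat -> exists j, (i0 <= j < i0 + B)%nat /\ ~ (c < g j)) ->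
  forall n, (T <= n)%nat -> (n < T + B * (n - count_gt g c n) + B)%nat.
Proof.
  intros HB H n Hn.
  set (m := ((n - T) / B)%nat).
  pose proof (Nat.div_mod_eq (n - T) B) as E. fold m in E.
  pose proof (Nat.mod_upper_bound (n - T) B ltac:(lia)) as E2.
  pose proof (count_gt_blocks g c T B HB H m) as H1.
  pose proof (count_gt_add g c (T + m * B) (n - (T + m*B))) as H2.
  replace (T + m * B + (n - (T + m * B)))%nat with n in H2 by lia.
  assert (m <= n - count_gt g c n)%nat by lia.
  assert (B * m <= B * (n - count_gt g c n))%nat by (apply Nat.mul_le_mono_l; lia).
  lia.
Qed.

Lemma ratio_bound (c n B : nat) : (1 <= B)%nat -> (1 <= n)%nat ->
  1 - / (2 * INR B) < INR c / INR n -> (c <= n)%nat -> (2 * B * (n - c) < n)%nat.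
Proof.
  intros HB Hn H Hc.
  assert (HnR : 0 < INR n) by (apply lt_0_INR; lia).
  assert (HBR : 1 <= INR B) by (apply (le_INR 1); lia).
  assert (E1 : INR c / INR n * INR n = INR c) by (field; lra).
  assert (E2 : (1 - / (2 * INR B)) * (2 * INR B) = 2 * INR B - 1) by (field; lra).
  assert (H' : (1 - / (2 * INR B)) * INR n < INR c / INR n * INR n) by (apply Rmult_lt_compat_r; lra).
  rewrite E1 in H'.
  assert (H'' : (1 - / (2 * INR B)) * INR n * (2 * INR B) < INR c * (2 * INR B)) by (apply Rmult_lt_compat_r; lra).
  replace ((1 - / (2 * INR B)) * INR n * (2 * INR B)) with ((2 * INR B - 1) * INR n) in H'' by (rewrite <- E2; ring).
  apply INR_lt. rewrite !mult_INR, minus_INR by lia. simpl (INR 2). lra.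
Qed.

Lemma far_run g c T B : (1 <= B)%nat ->
  is_limsup (fun n => INR (count_gt g c n) / INR n) 1 ->
  exists i0, (T <= i0)%nat /\ forall j, (i0 <= j < i0 + B)%nat -> c < g j.
Proof.
  intros HB Hl. apply NNPP. intro Hn.
  assert (H : forall i0, (T <= i0)%nat -> exists j, (i0 <= j < i0 + B)%nat /\ ~ (c < g j)).
  { intros i0 Hi0. apply NNPP. intro Hj. apply Hn. exists i0. split; auto.
    intros j Hj'. apply NNPP. intro Hc. apply Hj. exists j. auto. }
  assert (He : 0 < / (2 * INR B)).
  { apply Rinv_0_lt_compat. assert (1 <= INR B) by (apply (le_INR 1); lia). lra. }
  destruct (Hl _ He) as [Hl1 _].
  destruct (Hl1 (2 * T + 2 * B)%nat) as [n [Hn1 Hn2]].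
  pose proof (ratio_bound (count_gt g c n) n B HB ltac:(lia) Hn2 (count_gt_le g c n)).
  pose proof (count_gt_run g c T B HB H n ltac:(lia)).
  remember (n - count_gt g c n)%nat as k.
  replace (2 * B * k)%nat with (2 * (B * k))%nat in * by ring.
  remember (B * k)%nat as q. lia.
Qed.

Lemma count_lt_bound g c N : (forall i, (N <= i)%nat -> ~ (g i < c)) ->
  forall n, (count_lt g c n <= Nat.min n N)%nat.
Proof.
  intros H n. induction n; cbn [count_lt]; [lia|].
  destruct (Rlt_dec (g n) c) as [Hl|Hl].
  - assert (n < N)%nat. { destruct (Nat.lt_ge_cases n N); auto. exfalso. apply (H n); auto. }
    lia.
  - lia.
Qed.

Lemma close_inf g c : is_limsup (fun n => INR (count_lt g c n) / INR n) 1 ->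
  forall N, exists i, (N <= i)%nat /\ g i < c.
Proof.
  intros Hl N. apply NNPP. intro Hn.
  assert (H : forall i, (N <= i)%nat -> ~ (g i < c)).
  { intros i Hi Hc. apply Hn. exists i. auto. }
  destruct (Hl (1/2) ltac:(lra)) as [Hl1 _].
  destruct (Hl1 (2 * N + 1)%nat) as [n [Hn1 Hn2]].
  pose proof (count_lt_bound g c N H n) as Hb.
  assert (HnR : 0 < INR n) by (apply lt_0_INR; lia).
  assert (E1 : INR (count_lt g c n) / INR n * INR n = INR (count_lt g c n)) by (field; lra).
  assert (H' : (1 - 1/2) * INR n < INR (count_lt g c n)).
  { rewrite <- E1. apply Rmult_lt_compat_r; lra. }
  assert (H2 : (count_lt g c n <= N)%nat) by lia.
  apply le_INR in H2. apply le_INR in Hn1. rewrite plus_INR, mult_INR in Hn1. simpl in Hn1. lra.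
Qed.

Definition app_ch {X : Type} (xs : nat -> X) (a : nat) (ys : nat -> X) : nat -> X :=
  fun i => if (i <=? a)%nat then xs i else ys (i - a)%nat.

Lemma app_chain {X} (d : X -> X -> R) f del xs a ys b :
  is_chain d f del xs a -> is_chain d f del ys b -> xs a = ys O ->
  is_chain d f del (app_ch xs a ys) (a + b).
Proof.
  intros [Ha Hxs] [Hb Hys] E. split; [lia|]. intros i Hi. unfold app_ch.
  destruct (Nat.leb_spec i a); destruct (Nat.leb_spec (S i) a).
  - apply Hxs. lia.
  - assert (i = a) by lia. subst i. replace (S a - a)%nat with 1%nat by lia.
    rewrite E. apply Hys. lia.
  - lia.
  - replace (S i - a)%nat with (S (i - a)) by lia. apply Hys. lia.
Qed.

Lemma app_all {X} (P : X -> Prop) xs a ys b :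
  (forall i, (i <= a)%nat -> P (xs i)) -> (forall i, (i <= b)%nat -> P (ys i)) ->
  forall i, (i <= a + b)%nat -> P (app_ch xs a ys i).
Proof.
  intros H1 H2 i Hi. unfold app_ch. destruct (Nat.leb_spec i a).
  apply H1; lia. apply H2; lia.
Qed.

Lemma app_0 {X} (xs : nat -> X) a ys : app_ch xs a ys O = xs O.
Proof. reflexivity. Qed.

Lemma app_end {X} (xs : nat -> X) a ys b : xs a = ys O -> app_ch xs a ys (a + b)%nat = ys b.
Proof.
  intros E. unfold app_ch. destruct (Nat.leb_spec (a + b) a).
  assert (b = O) by lia. subst b. rewrite Nat.add_0_r. exact E.
  f_equal. lia.
Qed.

Lemma rep_chain {X} (d : X -> X -> R) f del (P : X -> Prop) (z w : X) cyc ch c :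
  is_chain d f del cyc c -> (forall i, (i <= c)%nat -> P (cyc i)) -> cyc O = z -> cyc c = z ->
  is_chain d f del ch c -> (forall i, (i <= c)%nat -> P (ch i)) -> ch O = z -> ch c = w ->
  forall n, (1 <= n)%nat -> exists xs, is_chain d f del xs (c * n) /\
    (forall i, (i <= c * n)%nat -> P (xs i)) /\ xs O = z /\ xs (c * n)%nat = w.
Proof.
  intros Hc HPc Hc0 Hcc Hh HPh Hh0 Hhc n Hn. induction n as [|n IH]. lia.
  destruct (Nat.eq_dec n 0) as [->|Hn0].
  - exists ch. rewrite Nat.mul_1_r. auto.
  - destruct IH as [xs [H1 [H2 [H3 H4]]]]. lia.
    exists (app_ch cyc c xs). replace (c * S n)%nat with (c + c * n)%nat by lia.
    split; [apply app_chain; auto; congruence|].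
    split; [apply app_all; auto|].
    split; [rewrite app_0; auto|]. rewrite app_end; auto. congruence.
Qed.

Section Main.
Variable X : Type.
Variable d : X -> X -> R.
Hypothesis Hd : is_metric d.
Hypothesis Hcpt : is_compact d.
Variable f : X -> X.
Hypothesis Hf : is_continuous d f.
Variables x y : X.

Let tri a b c := d_tri X d Hd a b c.
Let sym a b := d_sym X d Hd a b.
Let refl a := d_refl X d Hd a.
Let dpos a b := d_pos X d Hd a b.

Definition Om z w := in_omega_pair d f x y z w.

Lemma shadow_chain (o : nat -> X) (Ho : forall n, o (S n) = f (o n)) del eta
  (HU : forall a b, d a b < eta -> d (f a) (f b) < del / 2) (s : nat -> X) n k :
  (1 <= k)%nat -> (forall i, (i <= k)%nat -> d (s i) (o (n + i)%nat) < Rmin eta (del / 2)) ->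
  is_chain d f del s k.
Proof.
  intros Hk H. split; auto. intros i Hi.
  pose proof (H i ltac:(lia)) as H1. pose proof (H (S i) ltac:(lia)) as H2.
  rewrite Nat.add_succ_r, Ho in H2.
  assert (E1 : d (f (s i)) (f (o (n + i)%nat)) < del / 2).
  { apply HU. pose proof (Rmin_l eta (del/2)). lra. }
  pose proof (Rmin_r eta (del/2)).
  pose proof (tri (f (s i)) (f (o (n + i)%nat)) (s (S i))).
  rewrite (sym (f (o (n+i)%nat))) in H3. lra.
Qed.

Lemma omega_CR1 (o : nat -> X) (Ho : forall n, o (S n) = f (o n)) z :
  (forall eps, 0 < eps -> forall N, exists n, (N <= n)%nat /\ d (o n) z < eps) -> CR d f z.
Proof.
  intros Hz del Hdel.
  destruct (unif_cont X d Hd Hcpt f Hf (del/2) ltac:(lra)) as [eta [Heta HU]].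
  assert (Hm : 0 < Rmin eta (del/2)) by (apply Rmin_glb_lt; lra).
  destruct (Hz _ Hm O) as [n [_ Hn]].
  destruct (Hz _ Hm (S n)) as [m [Hm1 Hm2]].
  set (k := (m - n)%nat).
  exists k, (fun i => if orb (i =? 0)%nat (i =? k)%nat then z else o (n + i)%nat).
  split; [|split].
  - apply (shadow_chain o Ho del eta HU _ n k). unfold k; lia.
    intros i Hi. destruct (Nat.eqb_spec i 0); destruct (Nat.eqb_spec i k); simpl.
    + subst. rewrite Nat.add_0_r, sym. auto.
    + subst. rewrite Nat.add_0_r, sym. auto.
    + subst. replace (n + k)%nat with m by (unfold k; lia). rewrite sym. auto.
    + rewrite refl. auto.
  - reflexivity.
  - rewrite Nat.eqb_refl, Bool.orb_true_r. reflexivity.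
Qed.

Lemma Om_CR z w : Om z w -> CR d f z /\ CR d f w.
Proof.
  intros H. split.
  - apply (omega_CR1 (fun n => iter n f x)); [reflexivity|].
    intros eps He N. destruct (H eps He N) as [n [? [? ?]]]. exists n. auto.
  - apply (omega_CR1 (fun n => iter n f y)); [reflexivity|].
    intros eps He N. destruct (H eps He N) as [n [? [? ?]]]. exists n. auto.
Qed.

Lemma Om_sub (h : nat -> nat) (Hh : forall k, (k <= h k)%nat) z w :
  (forall eps, 0 < eps -> forall N, exists n, (N <= n)%nat /\
     d (iter (h n) f x) z < eps /\ d (iter (h n) f y) w < eps) -> Om z w.
Proof.
  intros H eps He N. destruct (H eps He N) as [n [H1 [H2 H3]]].
  exists (h n). specialize (Hh n). repeat split; auto. lia.
Qed.

Lemma near_Om eta : 0 < eta -> exists T, forall n, (T <= n)%nat -> exists z w,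
  Om z w /\ d (iter n f x) z < eta /\ d (iter n f y) w < eta.
Proof.
  intros He. apply NNPP. intro Hn.
  assert (H : forall T, exists n, (T <= n)%nat /\ forall z w, Om z w ->
     ~ (d (iter n f x) z < eta /\ d (iter n f y) w < eta)).
  { intro T. apply NNPP. intro HT. apply Hn. exists T. intros n Hn1.
    apply NNPP. intro Hz. apply HT. exists n. split; auto. intros z w Hzw Hc.
    apply Hz. exists z, w. tauto. }
  destruct (my_choice _ H) as [h Hh].
  destruct (acc2 X d Hd Hcpt (fun k => iter (h k) f x) (fun k => iter (h k) f y)) as [z [w Hzw]].
  assert (HO : Om z w). { apply (Om_sub h); auto. intro k. apply Hh. }
  destruct (Hzw eta He O) as [k [_ [H1 H2]]].
  apply ((proj2 (Hh k)) z w HO). auto.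
Qed.

Lemma Om_closed z w : (forall eps, 0 < eps -> exists z' w', Om z' w' /\ d z' z < eps /\ d w' w < eps) ->
  Om z w.
Proof.
  intros H eps He N. destruct (H (eps/2) ltac:(lra)) as [z' [w' [H1 [H2 H3]]]].
  destruct (H1 (eps/2) ltac:(lra) N) as [n [Hn [H4 H5]]]. exists n. split; auto.
  pose proof (tri (iter n f x) z' z). pose proof (tri (iter n f y) w' w). lra.
Qed.

Lemma choose_near eta T : (forall n, (T <= n)%nat -> exists z w,
  Om z w /\ d (iter n f x) z < eta /\ d (iter n f y) w < eta) ->
  exists g : nat -> X * X, forall n, (T <= n)%nat -> Om (fst (g n)) (snd (g n)) /\
    d (iter n f x) (fst (g n)) < eta /\ d (iter n f y) (snd (g n)) < eta.
Proof.
  intros H. apply (my_choice (fun n (p : X * X) => (T <= n)%nat -> Om (fst p) (snd p) /\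
    d (iter n f x) (fst p) < eta /\ d (iter n f y) (snd p) < eta)).
  intro n. destruct (Nat.le_gt_cases T n) as [Hn|Hn].
  - destruct (H n Hn) as [z [w Hzw]]. exists (z, w). auto.
  - exists (x, x). intro. lia.
Qed.

Lemma chain_trans p1 p2 q1 q2 del : 0 < del -> Om p1 p2 -> Om q1 q2 ->
  exists k xs ys, is_chain d f del xs k /\ is_chain d f del ys k /\
   (forall i, (i <= k)%nat -> Om (xs i) (ys i)) /\
   xs O = p1 /\ ys O = p2 /\ xs k = q1 /\ ys k = q2.
Proof.
  intros Hdel Hp Hq.
  destruct (unif_cont X d Hd Hcpt f Hf (del/2) ltac:(lra)) as [eta [Heta HU]].
  assert (Hm : 0 < Rmin eta (del/2)) by (apply Rmin_glb_lt; lra).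
  set (e := Rmin eta (del/2)).
  destruct (near_Om e Hm) as [T HT].
  destruct (choose_near e T HT) as [g Hg].
  destruct (Hp e Hm T) as [n [Hn1 [Hn2 Hn3]]].
  destruct (Hq e Hm (S n)) as [m [Hm1 [Hm2 Hm3]]].
  set (k := (m - n)%nat).
  exists k, (fun i => if (i =? 0)%nat then p1 else if (i =? k)%nat then q1 else fst (g (n + i)%nat)),
            (fun i => if (i =? 0)%nat then p2 else if (i =? k)%nat then q2 else snd (g (n + i)%nat)).
  split; [|split; [|split; [|split; [|split; [|split]]]]].
  - apply (shadow_chain (fun i => iter i f x) (fun _ => eq_refl) del eta HU _ n k). unfold k; lia.
    intros i Hi. destruct (Nat.eqb_spec i 0); [|destruct (Nat.eqb_spec i k)].
    + subst. rewrite Nat.add_0_r, sym. auto.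
    + subst. replace (n + k)%nat with m by (unfold k; lia). rewrite sym. auto.
    + rewrite sym. apply Hg. lia.
  - apply (shadow_chain (fun i => iter i f y) (fun _ => eq_refl) del eta HU _ n k). unfold k; lia.
    intros i Hi. destruct (Nat.eqb_spec i 0); [|destruct (Nat.eqb_spec i k)].
    + subst. rewrite Nat.add_0_r, sym. auto.
    + subst. replace (n + k)%nat with m by (unfold k; lia). rewrite sym. auto.
    + rewrite sym. apply Hg. lia.
  - intros i Hi. destruct (Nat.eqb_spec i 0); [|destruct (Nat.eqb_spec i k)]; auto.
    apply Hg. lia.
  - reflexivity.
  - reflexivity.
  - assert (k <> O) by (unfold k; lia). destruct (Nat.eqb_spec k 0); [lia|]. rewrite Nat.eqb_refl. reflexivity.
  - assert (k <> O) by (unfold k; lia). destruct (Nat.eqb_spec k 0); [lia|]. rewrite Nat.eqb_refl. reflexivity.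
Qed.

End Main.

Lemma notnodup_map {B} (h : nat -> B) (s : list nat) : NoDup s -> ~ NoDup (map h s) ->
  exists a b, In a s /\ In b s /\ a <> b /\ h a = h b.
Proof.
  induction s as [|c s IH]; intros Hs Hn.
  - exfalso. apply Hn. constructor.
  - inversion Hs as [|? ? Hc Hs']. subst.
    destruct (classic (In (h c) (map h s))) as [Hi|Hi].
    + apply in_map_iff in Hi. destruct Hi as [b [Hb1 Hb2]].
      exists c, b. repeat split; auto. left; auto. right; auto. intro; subst; auto.
    + destruct IH as [a [b [H1 [H2 [H3 H4]]]]]; auto.
      { intro Hnd. apply Hn. simpl. constructor; auto. }
      exists a, b. repeat split; auto; right; auto.
Qed.

Lemma pigeon {B} (h : nat -> B) (lb : list B) : (forall t, In (h t) lb) ->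
  forall i0 L, (length lb <= L)%nat -> exists a b, (i0 <= a < b)%nat /\ (b <= i0 + L)%nat /\ h a = h b.
Proof.
  intros Hin i0 L HL.
  assert (Hn : ~ NoDup (map h (seq i0 (S L)))).
  { intro Hnd. pose proof (NoDup_incl_length Hnd (l' := lb)) as H.
    rewrite length_map, length_seq in H. assert (S L <= length lb)%nat. apply H.
    intros v Hv. apply in_map_iff in Hv. destruct Hv as [t [<- _]]. apply Hin. lia. }
  destruct (notnodup_map h _ (seq_NoDup _ _) Hn) as [a [b [Ha [Hb [Hab E]]]]].
  apply in_seq in Ha. apply in_seq in Hb.
  destruct (Nat.lt_total a b) as [H|[H|H]].
  - exists a, b. repeat split; try lia; auto.
  - exfalso; lia.
  - exists b, a. repeat split; try lia; auto.
Qed.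

Section Main2.
Variable X : Type.
Variable d : X -> X -> R.
Hypothesis Hd : is_metric d.
Hypothesis Hcpt : is_compact d.
Variable f : X -> X.
Hypothesis Hf : is_continuous d f.
Variables x y : X.

Let tri a b c := d_tri X d Hd a b c.
Let sym a b := d_sym X d Hd a b.
Let refl a := d_refl X d Hd a.
Let dpos a b := d_pos X d Hd a b.
Let Om := Om X d f x y.

Definition Kpt r z w := Om z w /\ r <= d z w.
Definition Cyc r del z w := exists k xs ys, is_chain d f del xs k /\ is_chain d f del ys k /\
  (forall i, (i <= k)%nat -> Kpt r (xs i) (ys i)) /\
  xs O = z /\ xs k = z /\ ys O = w /\ ys k = w.

Lemma cyc_chain (o : nat -> X) (Ho : forall n, o (S n) = f (o n)) (G : nat -> X) a k del e eta
  (Hk : (1 <= k)%nat) (HG : forall j, (j <= k)%nat -> d (o (a + j)%nat) (G (a + j)%nat) < e)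
  (Hab : d (o (a + k)%nat) (o a) < del / 3)
  (HU : forall u v, d u v < eta -> d (f u) (f v) < del / 3) (He1 : e <= eta) (He2 : e <= del / 3) :
  is_chain d f del (fun j => if (j =? k)%nat then G a else G (a + j)%nat) k.
Proof.
  split; auto. intros j Hj. cbv beta.
  destruct (Nat.eqb_spec j k); [lia|].
  assert (E1 : d (f (G (a + j)%nat)) (f (o (a + j)%nat)) < del / 3).
  { apply HU. rewrite sym. specialize (HG j ltac:(lia)). lra. }
  rewrite <- Ho, <- Nat.add_succ_r in E1.
  pose proof (dpos (f (G (a + j)%nat)) (o (a + S j)%nat)).
  pose proof (tri (f (G (a + j)%nat)) (o (a + S j)%nat) (if (S j =? k)%nat then G a else G (a + S j)%nat)).
  destruct (Nat.eqb_spec (S j) k).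
  - subst k. pose proof (tri (o (a + S j)%nat) (o a) (G a)).
    specialize (HG O ltac:(lia)). rewrite Nat.add_0_r in HG. lra.
  - specialize (HG (S j) ltac:(lia)). lra.
Qed.

Lemma far_cycle del0 : 0 < del0 ->
  is_limsup (fun n => INR (count_gt (fun i => d (iter i f x) (iter i f y)) del0 n) / INR n) 1 ->
  forall del, 0 < del -> exists z w, Kpt (del0 / 2) z w /\ Cyc (del0 / 2) del z w.
Proof.
  intros Hd0 Hl del Hdel.
  destruct (unif_cont X d Hd Hcpt f Hf (del/3) ltac:(lra)) as [eta [Heta HU]].
  set (e := Rmin eta (Rmin (del/3) (del0/4))).
  assert (He0 : 0 < e) by (apply Rmin_glb_lt; [lra|apply Rmin_glb_lt; lra]).
  assert (He1 : e <= eta) by apply Rmin_l.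
  assert (He2 : e <= del/3) by (eapply Rle_trans; [apply Rmin_r|apply Rmin_l]).
  assert (He3 : e <= del0/4) by (eapply Rle_trans; [apply Rmin_r|apply Rmin_r]).
  destruct (Hcpt X (fun c v => d c v < del / 6)) as [l Hl6].
  { intros c v Hv. exists (del/6 - d c v). split; [lra|].
    intros v' Hv'. pose proof (tri c v v'). lra. }
  { intros v. exists v. rewrite refl. lra. }
  destruct (near_Om X d Hd Hcpt f x y e He0) as [T HT].
  destruct (choose_near X d f x y e T HT) as [g Hg].
  destruct (my_choice (fun t (p : X * X) => In (fst p) l /\ d (fst p) (iter t f x) < del / 6 /\
                                          In (snd p) l /\ d (snd p) (iter t f y) < del / 6)) as [c Hc].
  { intro t. destruct (Hl6 (iter t f x)) as [c1 [? ?]]. destruct (Hl6 (iter t f y)) as [c2 [? ?]].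
    exists (c1, c2). simpl. auto. }
  set (L := (length l * length l)%nat).
  destruct (far_run (fun i => d (iter i f x) (iter i f y)) del0 T (S L) ltac:(lia) Hl) as [i0 [Hi0 Hfar]].
  destruct (pigeon c (list_prod l l)) with (i0 := i0) (L := L) as [a [b [Hab1 [Hab2 Eab]]]].
  { intro t. destruct (Hc t) as [? [? [? ?]]]. destruct (c t) as [c1 c2]. apply in_prod; auto. }
  { rewrite length_prod. unfold L. lia. }
  assert (D1 : d (iter b f x) (iter a f x) < del / 3).
  { destruct (Hc a) as [_ [Ha _]]. destruct (Hc b) as [_ [Hb _]]. rewrite Eab in Ha.
    pose proof (tri (iter b f x) (fst (c b)) (iter a f x)). rewrite (sym (iter b f x) (fst (c b))) in H. lra. }
  assert (D2 : d (iter b f y) (iter a f y) < del / 3).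
  { destruct (Hc a) as [_ [_ [_ Ha]]]. destruct (Hc b) as [_ [_ [_ Hb]]]. rewrite Eab in Ha.
    pose proof (tri (iter b f y) (snd (c b)) (iter a f y)). rewrite (sym (iter b f y) (snd (c b))) in H. lra. }
  assert (HK : forall t, (a <= t <= b)%nat -> Kpt (del0/2) (fst (g t)) (snd (g t))).
  { intros t Ht. destruct (Hg t ltac:(lia)) as [Hg1 [Hg2 Hg3]]. split; auto.
    specialize (Hfar t ltac:(lia)). simpl in Hfar.
    pose proof (tri (iter t f x) (fst (g t)) (iter t f y)).
    pose proof (tri (fst (g t)) (snd (g t)) (iter t f y)).
    rewrite (sym (snd (g t))) in H0. lra. }
  set (k := (b - a)%nat).
  exists (fst (g a)), (snd (g a)). split; [apply HK; lia|].
  exists k, (fun j => if (j =? k)%nat then fst (g a) else fst (g (a + j)%nat)),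
            (fun j => if (j =? k)%nat then snd (g a) else snd (g (a + j)%nat)).
  split; [|split; [|split; [|split; [|split; [|split]]]]].
  - apply (cyc_chain (fun i => iter i f x) (fun _ => eq_refl) (fun t => fst (g t)) a k del e eta);
      auto; try (unfold k; lia).
    + intros j Hj. apply Hg. lia.
    + replace (a + k)%nat with b by (unfold k; lia). exact D1.
  - apply (cyc_chain (fun i => iter i f y) (fun _ => eq_refl) (fun t => snd (g t)) a k del e eta);
      auto; try (unfold k; lia).
    + intros j Hj. apply Hg. lia.
    + replace (a + k)%nat with b by (unfold k; lia). exact D2.
  - intros i Hi. destruct (Nat.eqb_spec i k); apply HK; unfold k in *; lia.
  - destruct (Nat.eqb_spec 0 k); [unfold k in *; lia|]. rewrite Nat.add_0_r. reflexivity.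
  - rewrite Nat.eqb_refl. reflexivity.
  - destruct (Nat.eqb_spec 0 k); [unfold k in *; lia|]. rewrite Nat.add_0_r. reflexivity.
  - rewrite Nat.eqb_refl. reflexivity.
Qed.

End Main2.

Section Main3.
Variable X : Type.
Variable d : X -> X -> R.
Hypothesis Hd : is_metric d.
Hypothesis Hcpt : is_compact d.
Variable f : X -> X.
Hypothesis Hf : is_continuous d f.
Variables x y : X.

Let tri a b c := d_tri X d Hd a b c.
Let sym a b := d_sym X d Hd a b.
Let refl a := d_refl X d Hd a.
Let dpos a b := d_pos X d Hd a b.
Let Om := Om X d f x y.

Lemma diag_point : (forall del, 0 < del ->
     is_limsup (fun n => INR (count_lt (fun i => d (iter i f x) (iter i f y)) del n) / INR n) 1) ->
  exists u, Om u u.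
Proof.
  intros Hc.
  assert (H : forall k, exists i, (k <= i)%nat /\ d (iter i f x) (iter i f y) < epsk k).
  { intro k. apply (close_inf (fun i => d (iter i f x) (iter i f y))). apply Hc. apply epsk_pos. }
  destruct (my_choice _ H) as [h Hh].
  destruct (acc2 X d Hd Hcpt (fun k => iter (h k) f x) (fun k => iter (h k) f y)) as [u [w Huw]].
  assert (HO : Om u w). { apply (Om_sub X d f x y h); auto. intro k. apply Hh. }
  assert (E : d u w = 0).
  { apply Rle_antisym; [|apply dpos]. apply Rnot_lt_le. intro Hp.
    set (eps := d u w).
    destruct (epsk_small (eps/3) ltac:(unfold eps; lra)) as [K HK].
    destruct (Huw (eps/3) ltac:(unfold eps; lra) K) as [k [Hk1 [Hk2 Hk3]]].
    destruct (Hh k) as [_ Hh2]. specialize (HK k Hk1).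
    cbv beta in Hk2, Hk3.
    pose proof (tri u (iter (h k) f x) w) as T1. pose proof (tri (iter (h k) f x) (iter (h k) f y) w) as T2.
    rewrite (sym u (iter (h k) f x)) in T1. unfold eps in *. lra. }
  apply (d_eq X d Hd) in E. subst w. exists u. exact HO.
Qed.

Lemma endrep (xs : nat -> X) k e P z eta del :
  is_chain d f e xs k -> xs O = P -> xs k = P -> d P z < eta -> e <= del / 3 -> eta <= del / 3 ->
  (forall v, d z v < eta -> d (f z) (f v) < del / 3) ->
  is_chain d f del (fun i => if orb (i =? 0)%nat (i =? k)%nat then z else xs i) k.
Proof.
  intros [Hk Hc] HP0 Hk' Hz He Heta Hcont. split; auto. intros i Hi. cbv beta.
  assert (A : d (f (if orb (i =? 0)%nat (i =? k)%nat then z else xs i)) (f (xs i)) < del / 3).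
  { destruct (Nat.eqb_spec i 0); destruct (Nat.eqb_spec i k); simpl; try lia.
    - subst i. rewrite HP0. apply Hcont. rewrite sym. auto.
    - rewrite refl. pose proof (dpos P z). lra. }
  assert (B : d (xs (S i)) (if orb (S i =? 0)%nat (S i =? k)%nat then z else xs (S i)) < del / 3).
  { destruct (Nat.eqb_spec (S i) k); simpl.
    - subst k. rewrite Hk'. lra.
    - rewrite refl. pose proof (dpos P z). lra. }
  specialize (Hc i Hi).
  pose proof (tri (f (if orb (i =? 0)%nat (i =? k)%nat then z else xs i)) (f (xs i))
                  (if orb (S i =? 0)%nat (S i =? k)%nat then z else xs (S i))).
  pose proof (tri (f (xs i)) (xs (S i)) (if orb (S i =? 0)%nat (S i =? k)%nat then z else xs (S i))).
  lra.
Qed.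

Lemma stepB r : (forall del, 0 < del -> exists z w, Kpt X d f x y r z w /\ Cyc X d f x y r del z w) ->
  exists z w, Kpt X d f x y r z w /\ forall del, 0 < del -> Cyc X d f x y r del z w.
Proof.
  intros H.
  assert (H' : forall k, exists p : X * X, Kpt X d f x y r (fst p) (snd p) /\ Cyc X d f x y r (epsk k) (fst p) (snd p)).
  { intro k. destruct (H (epsk k) (epsk_pos k)) as [z [w Hzw]]. exists (z, w). auto. }
  destruct (my_choice _ H') as [P HP].
  destruct (acc2 X d Hd Hcpt (fun k => fst (P k)) (fun k => snd (P k))) as [z [w Hzw]].
  assert (HK : Kpt X d f x y r z w).
  { split.
    - apply (Om_closed X d Hd f x y). intros eps He. destruct (Hzw eps He O) as [k [_ [H1 H2]]].
      exists (fst (P k)), (snd (P k)). split; auto. apply (HP k).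
    - apply Rnot_lt_le. intro Hlt.
      destruct (Hzw ((r - d z w)/2) ltac:(lra) O) as [k [_ [H1 H2]]].
      destruct (HP k) as [[_ Hr] _].
      cbv beta in H1, H2.
      pose proof (tri (fst (P k)) z (snd (P k))) as T1. pose proof (tri z w (snd (P k))) as T2.
      rewrite (sym w (snd (P k))) in T2. lra. }
  exists z, w. split; auto. intros del Hdel.
  destruct (Hf z (del/3) ltac:(lra)) as [d1 [Hd1 Hc1]].
  destruct (Hf w (del/3) ltac:(lra)) as [d2 [Hd2 Hc2]].
  set (eta := Rmin (Rmin d1 d2) (del/3)).
  assert (Heta : 0 < eta) by (apply Rmin_glb_lt; [apply Rmin_glb_lt|]; lra).
  assert (E1 : eta <= d1) by (eapply Rle_trans; [apply Rmin_l|apply Rmin_l]).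
  assert (E2 : eta <= d2) by (eapply Rle_trans; [apply Rmin_l|apply Rmin_r]).
  assert (E3 : eta <= del/3) by apply Rmin_r.
  destruct (epsk_small (del/3) ltac:(lra)) as [K HKe].
  destruct (Hzw eta Heta K) as [k [Hk1 [Hk2 Hk3]]].
  destruct (HP k) as [_ [k' [xs [ys [C1 [C2 [C3 [C4 [C5 [C6 C7]]]]]]]]]].
  specialize (HKe k Hk1).
  exists k', (fun i => if orb (i =? 0)%nat (i =? k')%nat then z else xs i),
             (fun i => if orb (i =? 0)%nat (i =? k')%nat then w else ys i).
  split; [|split; [|split; [|split; [|split; [|split]]]]].
  - apply (endrep xs k' (epsk k) (fst (P k)) z eta del); auto; try lra.
    intros v Hv. apply Hc1. lra.
  - apply (endrep ys k' (epsk k) (snd (P k)) w eta del); auto; try lra.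
    intros v Hv. apply Hc2. lra.
  - intros i Hi. destruct (orb (i =? 0)%nat (i =? k')%nat); auto.
  - reflexivity.
  - rewrite Nat.eqb_refl, Bool.orb_true_r. reflexivity.
  - reflexivity.
  - rewrite Nat.eqb_refl, Bool.orb_true_r. reflexivity.
Qed.

End Main3.

Theorem propositionA1 (X : Type) (d : X -> X -> R) (f : X -> X)
  (Hd : is_metric d) (Hcpt : is_compact d) (Hf : is_continuous d f)
  (x y : X) (Hxy : DC1_pair d f x y) :
  exists z w : X,
    in_omega_pair d f x y z w /\ CR d f z /\ CR d f w /\
    CR_sim d f z w /\ property_star d f z w.
Proof.
  destruct Hxy as [Hclose [del0 [Hd0 Hfar]]].
  destruct (stepB X d Hd Hcpt f Hf x y (del0/2)) as [z [w [[HO Hr] HC]]].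
  { apply (far_cycle X d Hd Hcpt f Hf x y del0 Hd0 Hfar). }
  destruct (diag_point X d Hd Hcpt f x y Hclose) as [u Hu].
  destruct (Om_CR X d Hd Hcpt f Hf x y z w HO) as [Cz Cw].
  exists z, w. split; [exact HO|]. split; [exact Cz|]. split; [exact Cw|]. split.
  - split; [exact Cz|]. split; [exact Cw|].
    intros del Hdel.
    destruct (chain_trans X d Hd Hcpt f Hf x y z w u u del Hdel HO Hu)
      as [k1 [xs1 [ys1 [A1 [A2 [A3 [A4 [A5 [A6 A7]]]]]]]]].
    destruct (chain_trans X d Hd Hcpt f Hf x y u u z w del Hdel Hu HO)
      as [k2 [xs2 [ys2 [B1 [B2 [B3 [B4 [B5 [B6 B7]]]]]]]]].
    assert (CA : forall i, (i <= k1)%nat -> CR d f (xs1 i) /\ CR d f (ys1 i)).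
    { intros i Hi. apply (Om_CR X d Hd Hcpt f Hf x y). auto. }
    assert (CB : forall i, (i <= k2)%nat -> CR d f (xs2 i) /\ CR d f (ys2 i)).
    { intros i Hi. apply (Om_CR X d Hd Hcpt f Hf x y). auto. }
    exists (k1 + k2)%nat, 1%nat. split; [destruct A1; lia|]. split; [lia|].
    intros n Hn.
    destruct (rep_chain d f del (CR d f) z w (app_ch xs1 k1 xs2) (app_ch xs1 k1 ys2) (k1 + k2)
      ltac:(apply app_chain; auto; congruence)
      ltac:(apply app_all; intros; [apply CA|apply CB]; lia)
      ltac:(rewrite app_0; auto)
      ltac:(rewrite app_end; auto; congruence)
      ltac:(apply app_chain; auto; congruence)
      ltac:(apply app_all; intros; [apply CA|apply CB]; lia)
      ltac:(rewrite app_0; auto)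
      ltac:(rewrite app_end; auto; congruence) n Hn) as [xs [X1 [X2 [X3 X4]]]].
    destruct (rep_chain d f del (CR d f) w z (app_ch ys1 k1 ys2) (app_ch ys1 k1 xs2) (k1 + k2)
      ltac:(apply app_chain; auto; congruence)
      ltac:(apply app_all; intros; [apply CA|apply CB]; lia)
      ltac:(rewrite app_0; auto)
      ltac:(rewrite app_end; auto; congruence)
      ltac:(apply app_chain; auto; congruence)
      ltac:(apply app_all; intros; [apply CA|apply CB]; lia)
      ltac:(rewrite app_0; auto)
      ltac:(rewrite app_end; auto; congruence) n Hn) as [ys [Y1 [Y2 [Y3 Y4]]]].
    exists xs, ys. unfold chain_in_CR.
    split; [exact X1|]. split; [exact X2|]. split; [exact Y1|]. split; [exact Y2|].
    split; [exact X3|]. split; [exact Y4|]. split; [exact X4|exact Y3].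
  - split; [exact Cz|]. split; [exact Cw|].
    exists (del0/4). split; [lra|]. intros del Hdel.
    destruct (HC del Hdel) as [k [xs [ys [C1 [C2 [C3 [C4 [C5 [C6 C7]]]]]]]]].
    exists k, xs, ys.
    assert (CC : forall i, (i <= k)%nat -> CR d f (xs i) /\ CR d f (ys i)).
    { intros i Hi. apply (Om_CR X d Hd Hcpt f Hf x y). apply (C3 i Hi). }
    unfold chain_in_CR.
    split; [exact C1|]. split; [intros i Hi; apply (CC i Hi)|]. split; [exact C2|].
    split; [intros i Hi; apply (CC i Hi)|].
    split; [exact C4|]. split; [exact C5|]. split; [exact C6|]. split; [exact C7|].
    intros i Hi. destruct (C3 i Hi) as [_ Hri]. lra.
Qed.
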